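(* Let $n\ge 2$, $\mathbf A\in\mathcal G_n$ and $x\in\mathcal G_n(\mathbf A,\mathbf C_n)$. For each $i\in\operatorname{ran}x\setminus\{0\}$ let $u_i\colon A\to\{0,1\}$ be defined by $u_i(a)=1$ if and only if $x(a)\ge i$. Then each $u_i$ lies in $\mathcal D(U(\mathbf A),\mathbf 2)$, and the assignment $i\mapsto u_i$ is a bijection from $\operatorname{ran}x\setminus\{0\}$ onto the set ${\uparrow}(\omega\circ x)$ of elements of the poset $\mathcal D(U(\mathbf A),\mathbf 2)$ lying above $\omega\circ x$. In particular $|{\uparrow}(\omega\circ x)|\le n-1$. Moreover, for $x,y\in\mathcal G_n(\mathbf A,\mathbf C_n)$: $\omega\circ y$ covers $\omega\circ x$ in $\mathcal D(U(\mathbf A),\mathbf 2)$ if and only if $x^{-1}(\top)\subseteq y^{-1}(\top)$ and $|\operatorname{ran}x|-1=|\operatorname{ran}y|$.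
   Context: Fix an integer $n\ge 2$. $\mathbf C_n$ is the Heyting algebra whose universe is the chain $\{0<1<\dots<n-1\}$, with lattice operations min and max, $\bot=0$, $\top=n-1$, and $a\to b=\top$ if $a\le b$, $a\to b=b$ if $b<a$. $\mathcal G_n$ denotes the class of algebras isomorphic to subalgebras of direct powers of $\mathbf C_n$ (the variety generated by $\mathbf C_n$). For $\mathbf A\in\mathcal G_n$, $\mathcal G_n(\mathbf A,\mathbf C_n)$ is the set of Heyting algebra homomorphisms $\mathbf A\to\mathbf C_n$, and $\operatorname{ran}x$ denotes the image of $x$. $U(\mathbf A)$ denotes the bounded distributive lattice reduct of $\mathbf A$; $\mathbf 2$ is the two-element bounded lattice $\{0<1\}$; $\mathcal D(U(\mathbf A),\mathbf 2)$ is the set of bounded-lattice homomorphisms $U(\mathbf A)\to\mathbf 2$, ordered pointwise, and ${\uparrow}u$ denotes the set of elements $\ge u$ in this poset. $\omega\colon U(\mathbf C_n)\to\mathbf 2$ is the lattice homomorphism with $\omega(\top)=1$ and $\omega(k)=0$ for $k<\top$. *)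

(* Defs.v *)
From mathcomp Require Import all_boot.
From Stdlib Require Import ClassicalEpsilon.
Set Implicit Arguments. Unset Strict Implicit. Unset Printing Implicit Defensive.

(* An algebra in the signature of Heyting algebras (meet, join, bot, top, ->).
   No axioms are required: membership in G_n (below) forces them. *)
Record halg := HAlg {
  hcar :> Type;
  hmeet : hcar -> hcar -> hcar;
  hjoin : hcar -> hcar -> hcar;
  hbot : hcar;
  htop : hcar;
  himp : hcar -> hcar -> hcar }.

(* C_n is the chain 'I_n = {0 < ... < n-1}; top = n-1.
   x : A -> 'I_n is a Heyting-algebra homomorphism A -> C_n. *)
Definition hom_Cn (n : nat) (A : halg) (x : A -> 'I_n) : Prop :=
  [/\ forall a b, val (x (hmeet a b)) = minn (x a) (x b),
      forall a b, val (x (hjoin a b)) = maxn (x a) (x b),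
      val (x (hbot A)) = 0,
      val (x (htop A)) = n.-1 &
      forall a b, val (x (himp a b)) = if (x a <= x b) then n.-1 else val (x b)].

(* A is in G_n: A is isomorphic to a subalgebra of a direct power C_n^I,
   i.e. there is an injective homomorphism A -> C_n^I (whose components
   e i : A -> C_n are homomorphisms). *)
Definition in_Gn (n : nat) (A : halg) : Prop :=
  exists (I : Type) (e : I -> A -> 'I_n),
    (forall i, hom_Cn (e i)) /\
    (forall a b, (forall i, e i a = e i b) -> a = b).

Definition isD (A : halg) (u : A -> bool) : Prop :=
  [/\ forall a b, u (hmeet a b) = u a && u b,
      forall a b, u (hjoin a b) = u a || u b,
      u (hbot A) = false &
      u (htop A) = true].

Definition Dle (A : halg) (u v : A -> bool) : Prop := forall a, u a ==> v a.
Definition Dlt (A : halg) (u v : A -> bool) : Prop := Dle u v /\ ~ Dle v u.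
Definition Dcovers (A : halg) (u v : A -> bool) : Prop :=
  Dlt u v /\ ~ (exists w, isD w /\ Dlt u w /\ Dlt w v).

Definition omega (n : nat) (k : 'I_n) : bool := val k == n.-1.

Definition asbool (P : Prop) : bool :=
  if excluded_middle_informative P then true else false.

Definition ran (n : nat) (A : halg) (x : A -> 'I_n) : {set 'I_n} :=
  [set i | asbool (exists a, x a = i)].

Definition u_of (n : nat) (A : halg) (x : A -> 'I_n) (i : 'I_n) : A -> bool :=
  fun a => i <= x a.

(* Main.v *)
Require Import Defs.
From mathcomp Require Import all_boot zify.
From Stdlib Require Import ClassicalEpsilon FunctionalExtensionality ProofIrrelevance.
Set Implicit Arguments. Unset Strict Implicit. Unset Printing Implicit Defensive.

Lemma ranP n (A : halg) (x : A -> 'I_n) i : (i \in ran x) <-> exists a, x a = i.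
Proof.
rewrite /ran inE /asbool; case: excluded_middle_informative => //; split => //.
Qed.

Lemma meet_imp n (A : halg) (hA : in_Gn n A) (a b : A) :
  hmeet (hmeet a (himp a b)) b = hmeet a (himp a b).
Proof.
case: hA => I [e [he inj]]; apply: inj => i; apply: val_inj.
case: (he i) => hm hj hb ht hi; rewrite !hm hi.
have := ltn_ord (e i a); have := ltn_ord (e i b).
case: ifP => h; rewrite -?subn1 /=; lia.
Qed.

Lemma mono_u n (A : halg) (hA : in_Gn n A) (x : A -> 'I_n) (hx : hom_Cn x)
  (u : A -> bool) (hu : isD u) (hle : Dle (fun a => omega (x a)) u) (a b : A) :
  x a <= x b -> u a -> u b.
Proof.
move=> hab ua; case: hx => hm hj hb ht hi; case: hu => um uj ub ut.
have uc : u (himp a b).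
  by have := hle (himp a b); rewrite /omega hi hab eqxx.
have : u (hmeet a (himp a b)) by rewrite um ua uc.
by rewrite -(meet_imp hA) um => /andP[].
Qed.

Lemma homD n (hn : 2 <= n) (A : halg) (y : A -> 'I_n) (hy : hom_Cn y) : isD (fun a => omega (y a)).
Proof.
case: hy => hm hj hb ht hi; split.
- move=> a b; rewrite /omega hm; have := ltn_ord (y a); have := ltn_ord (y b).
  move=> h1 h2; apply/eqP/andP; rewrite -?subn1 /=; lia.
- move=> a b; rewrite /omega hj; have := ltn_ord (y a); have := ltn_ord (y b).
  move=> h1 h2; apply/eqP/orP; rewrite -?subn1 /=; lia.
- rewrite /omega hb; apply/eqP; rewrite -?subn1; lia.
- by rewrite /omega ht eqxx.
Qed.

Lemma asboolP (P : Prop) : reflect P (asbool P).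
Proof. by rewrite /asbool; case: excluded_middle_informative => h; constructor. Qed.

Lemma uD n (A : halg) (x : A -> 'I_n) (hx : hom_Cn x) (i : 'I_n) (hi0 : val i != 0) :
  isD (u_of x i).
Proof.
case: hx => hm hj hb ht hi; rewrite /u_of; split.
- by move=> a b; rewrite hm leq_min.
- by move=> a b; rewrite hj leq_max.
- rewrite hb; move: hi0; rewrite /=; lia.
- rewrite ht; have := ltn_ord i; rewrite -?subn1 /=; lia.
Qed.

Lemma surj n (A : halg) (hA : in_Gn n A) (x : A -> 'I_n) (hx : hom_Cn x)
  (u : A -> bool) (hu : isD u) (hle : Dle (fun a => omega (x a)) u) :
  exists2 i : 'I_n, (i \in ran x) && (val i != 0) & u = u_of x i.
Proof.
have ex : exists k, asbool (exists a, u a /\ val (x a) = k).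
  exists (val (x (htop A))); apply/asboolP; exists (htop A); split => //.
  by case: hu.
case: (ex_minnP ex) => k /asboolP [a0 [ua0 xa0]] kmin.
exists (x a0).
  apply/andP; split; first by apply/ranP; exists a0.
  apply/negP => /eqP h0.
  have : u (hbot A).
    apply: (mono_u hA hx hu hle _ ua0); case: hx => _ _ hb _ _.
    by rewrite hb h0.
  by case: hu => _ _ ->.
apply: functional_extensionality => a; rewrite /u_of.
apply/idP/idP.
- move=> ua; rewrite xa0; apply: kmin; apply/asboolP; by exists a.
- move=> h; exact: (mono_u hA hx hu hle h ua0).
Qed.

Lemma count_ran n (A : halg) (x y : A -> 'I_n) (hx : hom_Cn x) (hy : hom_Cn y)
  (i : 'I_n) (hyi : forall a, omega (y a) = (i <= x a)) :
  #|ran y| = #|ran x :&: [set s : 'I_n | s < i]| + 1.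
Proof.
case: (hy) => _ _ _ hty hiy; case: (hx) => _ _ _ htx hix.
have mono : forall a b, x a <= x b -> y a <= y b.
  move=> a b h; have := hyi (himp a b); rewrite /omega hiy hix h.
  have := ltn_ord i; have := ltn_ord (y a); have := ltn_ord (y b).
  case: ifP => // h2; rewrite -?subn1 /=; lia.
have strict : forall a b, x a < x b -> x a < i -> y a < y b.
  move=> a b h1 h2; have := hyi (himp b a); rewrite /omega hiy hix.
  rewrite (leqNgt (x b)) h1 /=. have := ltn_ord (y a); have := ltn_ord (y b).
  case: ifP => h3; rewrite -?subn1 /=; lia.
pose f (s : 'I_n) : 'I_n :=
  match excluded_middle_informative (exists a, x a = s) with
  | left h => y (proj1_sig (constructive_indefinite_description _ h))
  | right _ => s end.
have fx : forall a, f (x a) = y a.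
  move=> a; rewrite /f; case: excluded_middle_informative => [h|[]]; last by exists a.
  case: constructive_indefinite_description => a' /= e.
  by apply/val_inj/eqP; rewrite /= eqn_leq !mono // e.
set Ty := y (htop A).
have ytop : forall a, i <= x a -> y a = Ty.
  move=> a h; apply: val_inj; have := hyi a; rewrite h /omega hty => /eqP //.
set L := ran x :&: [set s : 'I_n | s < i].
have -> : ran y = Ty |: (f @: L).
  apply/setP => s; rewrite in_setU1; apply/idP/idP.
  - case/ranP=> a <-; case: (ltnP (x a) i) => h.
    + apply/orP; right; apply/imsetP; exists (x a); last by rewrite fx.
      rewrite in_setI inE h andbT; apply/ranP; by exists a.
    + by rewrite ytop // eqxx.
  - case/orP => [/eqP -> | /imsetP [s' hs' ->]]; apply/ranP; first by exists (htop A).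
    move: hs'; rewrite in_setI => /andP [/ranP [a <-] _]; exists a; by rewrite fx.
have nT : Ty \notin f @: L.
  apply/imsetP; case=> s' hs' e; move: hs'; rewrite in_setI inE => /andP [/ranP [a ea] lt].
  move: e; rewrite -ea fx => e; have := hyi a; rewrite -e /omega hty eqxx.
  by move/esym/idP; rewrite leqNgt ea lt.
rewrite cardsU1 nT card_in_imset; first by rewrite addnC.
  move=> s1 s2 /setIP [/ranP [a <-]]; rewrite inE => h1 /setIP [/ranP [b <-]]; rewrite inE => h2.
  rewrite !fx => e; case: (ltngtP (x a) (x b)) => h.
- by have := strict _ _ h h1; rewrite e ltnn.
- by have := strict _ _ h h2; rewrite e ltnn.
- exact: val_inj.
Qed.

Lemma DleU n (A : halg) (x : A -> 'I_n) (i j : 'I_n) :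
  i \in ran x -> Dle (u_of x i) (u_of x j) -> j <= i.
Proof. by case/ranP => a <- /(_ a); rewrite /u_of leqnn. Qed.

Lemma DleU' n (A : halg) (x : A -> 'I_n) (i j : 'I_n) :
  j <= i -> Dle (u_of x i) (u_of x j).
Proof. move=> h a; apply/implyP => h'; exact: leq_trans h h'. Qed.

Lemma omegax n (A : halg) (x : A -> 'I_n) (hx : hom_Cn x) :
  (fun a => omega (x a)) = u_of x (x (htop A)).
Proof.
case: hx => _ _ _ htx _; move: htx; rewrite /= => htx.
apply: functional_extensionality => a; rewrite /omega /u_of htx.
have := ltn_ord (x a); rewrite /=; case: (ltngtP (x a) n.-1); rewrite -?subn1; lia.
Qed.

Lemma memD n (A : halg) (x : A -> 'I_n) (i s : 'I_n) :
  (s \in ran x :\: [set s : 'I_n | s < i]) = (s \in ran x) && ~~ (s < i).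
Proof. by rewrite in_setD [s \in [set _ | _]]inE andbC. Qed.

Theorem lemma2p1 (n : nat) (hn : 2 <= n) (A : halg) (hA : in_Gn n A)
    (x : A -> 'I_n) (hx : hom_Cn x) :
  (* each u_i lies in D(U(A),2) *)
  (forall i : 'I_n, i \in ran x -> val i != 0 -> isD (u_of x i)) /\
  (* i |-> u_i maps ran x \ {0} into the up-set of omega o x *)
  (forall i : 'I_n, i \in ran x -> val i != 0 ->
     Dle (fun a => omega (x a)) (u_of x i)) /\
  (* injective *)
  (forall i j : 'I_n, i \in ran x -> val i != 0 -> j \in ran x -> val j != 0 ->
     u_of x i = u_of x j -> i = j) /\
  (* surjective onto the up-set of omega o x *)
  (forall u : A -> bool, isD u -> Dle (fun a => omega (x a)) u ->
     exists2 i : 'I_n, (i \in ran x) && (val i != 0) & u = u_of x i) /\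
  (* in particular |up(omega o x)| <= n - 1 *)
  (exists g : {u : A -> bool | isD u /\ Dle (fun a => omega (x a)) u} -> 'I_(n - 1),
     injective g) /\
  (* covering characterization *)
  (forall y : A -> 'I_n, hom_Cn y ->
     (Dcovers (fun a => omega (x a)) (fun a => omega (y a)) <->
      ((forall a, val (x a) = n.-1 -> val (y a) = n.-1) /\
       #|ran x| - 1 = #|ran y|))).
Proof.
set T := x (htop A).
have htx : nat_of_ord T = n.-1 by case: hx.
have leT : forall s : 'I_n, s <= T.
  move=> s; have := ltn_ord s; rewrite htx -?subn1; lia.
have Tr : T \in ran x by apply/ranP; exists (htop A).
have ox := omegax hx.
split; [|split; [|split; [|split; [|split]]]].
- move=> i _ hi0; exact: uD.
- move=> i _ _; rewrite ox; apply: DleU'; exact: leT.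
- move=> i j ir _ jr _ e; apply/val_inj/eqP; rewrite eqn_leq.
  apply/andP; split; [apply: (DleU jr); rewrite e | apply: (DleU ir); rewrite -e];
  by move=> a; apply/implyP.
- move=> u hu hle; exact: surj.
- have gE : forall p : {u : A -> bool | isD u /\ Dle (fun a => omega (x a)) u},
      {i : 'I_n | ((i \in ran x) && (val i != 0)) /\ sval p = u_of x i}.
    move=> [u [hu hle]]; apply: constructive_indefinite_description.
    by case: (surj hA hx hu hle) => i h1 h2; exists i.
  have h0 : 0 < n - 1 by lia.
  exists (fun p => insubd (Ordinal h0) (val (sval (gE p))).-1).
  move=> p q e; have := congr1 val e; rewrite !val_insubd.
  case: (gE p) => i [ipr ep]; case: (gE q) => j [jpr eq] /=.
  case/andP: ipr => ir i0; case/andP: jpr => jr j0.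
  have := ltn_ord i; have := ltn_ord j; move: i0 j0; rewrite /= => i0 j0 hj hi.
  have -> : i.-1 < n - 1 by lia.
  have -> : j.-1 < n - 1 by lia.
  move=> hij; have ij : i = j by apply: val_inj; rewrite /=; lia.
  apply: eq_sig_hprop; [move=> *; apply: proof_irrelevance | by rewrite ep eq ij].
- move=> y hy.
  have Hmid : forall i : 'I_n, (forall a, omega (y a) = (i <= x a)) -> i \in ran x ->
      i < T -> (forall j, j \in ran x -> i < j -> j < T -> False) ->
      #|ran x| - 1 = #|ran y|.
    move=> i hyi ir iT nomid.
    have cnt := count_ran hx hy hyi.
    have cID := cardsID [set s : 'I_n | s < i] (ran x).
    have HE : ran x :\: [set s : 'I_n | s < i] = [set i; T].
      apply/setP => s; rewrite memD in_set2; apply/idP/idP.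
      + case/andP => sr; rewrite -leqNgt => hs.
        case: (ltngtP i s) => h; last by apply/orP; left; apply/eqP/val_inj.
        * case: (ltngtP s T) => h'; last by apply/orP; right; apply/eqP/val_inj.
          - by case: (nomid s sr h h').
          - by have := leT s; rewrite leqNgt h'.
        * by rewrite leqNgt h in hs.
      + case/orP => /eqP ->; first by rewrite ir ltnn.
        by rewrite Tr -leqNgt leT.
    rewrite HE in cID; move: cID; rewrite cards2 (_ : (i != T) = true); last first.
      by apply/negP => /eqP h; move: iT; rewrite h ltnn.
    rewrite /= cnt => <-; by rewrite -[2]/(1+1) addnA addnK.
  split.
  + case=> [[hle hnle] hno].
    have incl : forall a, val (x a) = n.-1 -> val (y a) = n.-1.
      by move=> a ha; have := hle a; rewrite /omega ha eqxx /= => /eqP.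
    split => //.
    case: (surj hA hx (homD hn hy) hle) => i /andP [ir i0] eqy.
    have hyi : forall a, omega (y a) = (i <= x a) := fun a => congr1 (fun f => f a) eqy.
    apply: (Hmid i hyi ir).
    * rewrite ltnNge; apply/negP => h; apply: hnle; rewrite eqy ox; exact: DleU'.
    * move=> j jr ij jT; apply: hno; exists (u_of x j); split.
        apply: uD => //; apply/negP => /eqP h; move: ij; rewrite /= h ltn0 //.
      split; split.
      - rewrite ox; apply: DleU'; exact: leT.
      - by rewrite ox => /(DleU jr); rewrite leqNgt jT.
      - rewrite eqy; apply: DleU'; exact: ltnW.
      - by rewrite eqy => /(DleU ir); rewrite leqNgt ij.
  + case=> incl ceq.
    have hle : Dle (fun a => omega (x a)) (fun a => omega (y a)).
      move=> a; apply/implyP; rewrite /omega => /eqP h; apply/eqP; exact: incl.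
    case: (surj hA hx (homD hn hy) hle) => i /andP [ir i0] eqy.
    have hyi : forall a, omega (y a) = (i <= x a) := fun a => congr1 (fun f => f a) eqy.
    have cnt := count_ran hx hy hyi.
    have cID := cardsID [set s : 'I_n | s < i] (ran x).
    set H := ran x :\: [set s : 'I_n | s < i] in cID.
    have H2 : #|H| = 2.
      move: cnt ceq cID; move: (#|H|) (#|ran x|) (#|ran y|) (#|ran x :&: [set s : 'I_n | s < i]|) => a b c d; lia.
    have iH : i \in H by rewrite memD ir ltnn.
    have TH : T \in H by rewrite memD Tr -leqNgt leT.
    have iT : i < T.
      rewrite ltn_neqAle leT andbT; apply/negP => /eqP iT.
      have : #|H| <= #|[set T]|.
        apply: subset_leq_card; apply/subsetP => s; rewrite memD in_set1 => /andP [_].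
        rewrite -leqNgt iT => h; apply/eqP; apply: val_inj; apply/eqP.
        by rewrite eqn_leq h leT.
      by rewrite H2 cards1.
    have HE : [set i; T] = H.
      apply/eqP; rewrite eqEcard H2 cards2 (_ : (i != T) = true); last first.
        by apply/negP => /eqP h; move: iT; rewrite h ltnn.
      rewrite andbT; apply/subsetP => s; rewrite in_set2 => /orP [] /eqP -> //.
    split.
    * split; first exact: hle.
      by rewrite eqy ox => /(DleU ir); rewrite leqNgt iT.
    * case=> w [hw [[h1 h2] [h3 h4]]].
      case: (surj hA hx hw h1) => j /andP [jr j0] ew.
      have jT : j < T.
        rewrite ltnNge; apply/negP => h; apply: h2; rewrite ew ox; exact: DleU'.
      have ij : i < j.
        rewrite ltnNge; apply/negP => h; apply: h4; rewrite ew eqy; exact: DleU'.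
      have : j \in H by rewrite memD jr -leqNgt ltnW.
      rewrite -HE in_set2 => /orP [] /eqP h; move: ij jT; rewrite h ltnn //.
Qed.
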